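(* Let $V$ be $\eta_*$-regular and $\mu_V=\frac1N\sum_i\delta_{V_i}$. For every $p\ge2$ and every $a+bi\in\mathcal D_*$: if $a\ge0$ then $\displaystyle\int\frac{d\mu_V(x)}{|x-a-bi|^p}\asymp\frac{\sqrt{a+b}}{b^{p-1}}$; if $a\le0$ then $\displaystyle\int\frac{d\mu_V(x)}{|x-a-bi|^p}\asymp\frac{1}{(|a|+b)^{p-3/2}}$.
   Context: $V=\mathrm{diag}(V_1\le\dots\le V_N)$ deterministic real, $m_V(z)=\frac1N\sum_i(V_i-z)^{-1}$. $V$ is $\eta_*$-regular ($\eta_*=N^{-\phi_*}$, $0<\phi_*\le2/3$) if for some $C_V$: $C_V^{-1}\frac{\eta}{\sqrt{|E|+\eta}}\le\mathrm{Im}\,m_V(E+i\eta)\le C_V\frac{\eta}{\sqrt{|E|+\eta}}$ for $-1\le E\le0$, $\eta_*\le\eta\le10$; $C_V^{-1}\sqrt{|E|+\eta}\le\mathrm{Im}\,m_V\le C_V\sqrt{|E|+\eta}$ for $0\le E\le1$, $\eta_*^{1/2}\sqrt{|E|}+\eta_*\le\eta\le10$; no $V_i\in[-1,-\eta_*]$; $\|V\|\le N^{C_V}$. $\mathcal D_*=\{E+i\eta:-3/4\le E\le0,\,2\eta_*\le\eta\le10\}\cup\{E+i\eta:0\le E\le3/4,\,\eta_*^{1/2}\sqrt{|E|}+\eta_*\le\eta\le10\}\cup\{E+i\eta:-3/4\le E\le-2\eta_*,\,0\le\eta\le10\}$. $\asymp$ holds with constants depending only on $C_V$ and $p$. *)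

(* Defs.v *)
From Stdlib Require Import Reals Lra.
Open Scope R_scope.

Fixpoint sumN (N : nat) (f : nat -> R) : R :=
  match N with
  | O => 0
  | S n => sumN n f + f n
  end.

Definition eta_star (N : nat) (phi : R) : R := Rpower (INR N) (- phi).

(* Im m_V(E + i eta), with m_V(z) = (1/N) sum_i (V_i - z)^{-1}, written out:
   Im (V_i - E - i eta)^{-1} = eta / ((V_i - E)^2 + eta^2). *)
Definition Im_mV (N : nat) (V : nat -> R) (E eta : R) : R :=
  / INR N * sumN N (fun i => eta / ((V i - E)^2 + eta^2)).

(* V = diag(V_0 <= ... <= V_{N-1}) is eta_*-regular with constant CV *)
Definition regular (N : nat) (phi CV : R) (V : nat -> R) : Prop :=
  let es := eta_star N phi in
  (forall i j, (i <= j < N)%nat -> V i <= V j) /\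
  (forall E eta, -1 <= E <= 0 -> es <= eta <= 10 ->
     / CV * (eta / sqrt (Rabs E + eta)) <= Im_mV N V E eta /\
     Im_mV N V E eta <= CV * (eta / sqrt (Rabs E + eta))) /\
  (forall E eta, 0 <= E <= 1 -> sqrt es * sqrt (Rabs E) + es <= eta <= 10 ->
     / CV * sqrt (Rabs E + eta) <= Im_mV N V E eta /\
     Im_mV N V E eta <= CV * sqrt (Rabs E + eta)) /\
  (forall i, (i < N)%nat -> ~ (-1 <= V i <= - es)) /\
  (forall i, (i < N)%nat -> Rabs (V i) <= Rpower (INR N) CV).

Definition InDstar (es E eta : R) : Prop :=
  (-3/4 <= E <= 0 /\ 2 * es <= eta <= 10) \/
  (0 <= E <= 3/4 /\ sqrt es * sqrt (Rabs E) + es <= eta <= 10) \/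
  (-3/4 <= E <= - 2 * es /\ 0 <= eta <= 10).

Definition moment (N : nat) (V : nat -> R) (p a b : R) : R :=
  / INR N * sumN N (fun i => / Rpower (sqrt ((V i - a)^2 + b^2)) p).

Definition asymp (C X Y : R) : Prop := / C * Y <= X /\ X <= C * Y.

(* Main.v *)
Require Import Defs.
From Stdlib Require Import Reals Lra Lia Psatz.
Open Scope R_scope.

Lemma sumN_le N f g : (forall i, (i<N)%nat -> f i <= g i) -> sumN N f <= sumN N g.
Proof. induction N; simpl; intros H. lra.
apply Rplus_le_compat; [apply IHN; intros; apply H; lia | apply H; lia]. Qed.
Lemma sumN_add N f g : sumN N (fun i => f i + g i) = sumN N f + sumN N g.
Proof. induction N; simpl. lra. rewrite IHN; lra. Qed.
Lemma sumN_scal N c f : sumN N (fun i => c * f i) = c * sumN N f.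
Proof. induction N; simpl. lra. rewrite IHN; lra. Qed.
Lemma sumN_const N c : sumN N (fun _ => c) = INR N * c.
Proof. induction N; simpl sumN. simpl; lra. rewrite IHN, S_INR; lra. Qed.

Lemma avg_le N f g : (forall i, (i<N)%nat -> f i <= g i) ->
  / INR N * sumN N f <= / INR N * sumN N g.
Proof. intros H. destruct N. simpl; lra.
apply Rmult_le_compat_l. left; apply Rinv_0_lt_compat, lt_0_INR; lia.
apply sumN_le; auto. Qed.

Lemma avg_lin N (al be : R) f g : (0<N)%nat ->
  / INR N * sumN N (fun i => al * f i + be * g i) =
  al * (/ INR N * sumN N f) + be * (/ INR N * sumN N g).
Proof. intros. rewrite sumN_add, !sumN_scal. ring. Qed.

Lemma avg_const_lin N c (be : R) g : (0<N)%nat ->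
  / INR N * sumN N (fun i => c + be * g i) = c + be * (/ INR N * sumN N g).
Proof. intros HN. rewrite sumN_add, sumN_scal, sumN_const.
assert (0 < INR N) by (apply lt_0_INR; lia). field; lra. Qed.

Lemma Rpower_pos x y : 0 < Rpower x y.
Proof. unfold Rpower; apply exp_pos. Qed.

Lemma Rpower_sqrt2 s p : 0 < s -> Rpower (sqrt s) p = Rpower (sqrt s) (p-2) * s.
Proof. intros Hs. replace p with ((p-2) + INR 2) at 1 by (simpl; lra).
rewrite Rpower_plus, Rpower_pow. rewrite pow2_sqrt; lra. apply sqrt_lt_R0; lra. Qed.

Lemma Rpower_two x : 0 < x -> Rpower x 2 = x^2.
Proof. intros. replace 2 with (INR 2) by (simpl; lra). apply Rpower_pow; auto. Qed.

Lemma pw_small y2 b2 eta K R p : 0 <= y2 -> 0 <= b2 -> 0 < y2 + b2 -> 0 < eta -> 0 < K -> 0 < R -> 0 <= p ->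
  (K*eta)^2 + b2 <= R^2 ->
  eta / (y2 + eta^2) <= 2/K * ((K*eta) / (y2 + (K*eta)^2)) + Rpower R p / eta * / Rpower (sqrt (y2 + b2)) p.
Proof. intros Hy Hb Hs He HK HR Hp HR2.
assert (P1 : 0 < Rpower R p) by apply Rpower_pos.
assert (P2 : 0 < Rpower (sqrt (y2+b2)) p) by apply Rpower_pos.
assert (0 < K*eta) by nra. assert (0 < (K*eta)^2) by nra. assert (0 < eta^2) by nra.
destruct (Rle_lt_dec ((K*eta)^2) y2) as [Hf|Hn].
- assert (0 <= Rpower R p / eta * / Rpower (sqrt (y2 + b2)) p).
  { apply Rmult_le_pos; [unfold Rdiv; apply Rmult_le_pos|]; try left; try apply Rinv_0_lt_compat; auto. }
  assert (eta / (y2 + eta^2) <= 2/K * ((K*eta) / (y2 + (K*eta)^2))).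
  { replace (2/K * ((K*eta) / (y2 + (K*eta)^2))) with (2*eta/(y2+(K*eta)^2)) by (field; repeat split; intro; nra).
    unfold Rdiv. apply Rmult_le_reg_r with ((y2+eta^2)*(y2+(K*eta)^2)). nra.
    field_simplify; try nra. }
  lra.
- assert (Hle : Rpower (sqrt (y2+b2)) p <= Rpower R p).
  { apply Rle_Rpower_l; auto. split. apply sqrt_lt_R0; lra.
    rewrite <- (sqrt_pow2 R) by lra. apply sqrt_le_1_alt. lra. }
  assert (0 <= 2/K * ((K*eta) / (y2 + (K*eta)^2))).
  { unfold Rdiv. apply Rmult_le_pos. apply Rmult_le_pos. lra. left; apply Rinv_0_lt_compat; auto.
    apply Rmult_le_pos. nra. left; apply Rinv_0_lt_compat; nra. }
  assert (eta / (y2 + eta^2) <= Rpower R p / eta * / Rpower (sqrt (y2 + b2)) p).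
  { apply Rle_trans with (/eta).
    unfold Rdiv. apply Rmult_le_reg_r with ((y2+eta^2)*eta). nra. field_simplify; nra.
    replace (Rpower R p / eta * / Rpower (sqrt (y2 + b2)) p) with
     (/eta * (Rpower R p / Rpower (sqrt (y2 + b2)) p)) by (field; lra).
    rewrite <- (Rmult_1_r (/eta)) at 1. apply Rmult_le_compat_l. left; apply Rinv_0_lt_compat; auto.
    apply Rmult_le_reg_r with (Rpower (sqrt (y2 + b2)) p); auto. field_simplify; lra. }
  lra.
Qed.

Lemma pw_large y2 b2 M R p : 0 <= y2 -> 0 <= b2 -> 0 < y2 + b2 -> 0 < M -> 0 < R -> 0 <= p ->
  M^2 + b2 <= R^2 ->
  10 / (y2 + 10^2) <= 10 / M^2 + Rpower R p / 10 * / Rpower (sqrt (y2 + b2)) p.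
Proof. intros Hy Hb Hs HM HR Hp HR2.
assert (P1 : 0 < Rpower R p) by apply Rpower_pos.
assert (P2 : 0 < Rpower (sqrt (y2+b2)) p) by apply Rpower_pos.
assert (0 < M^2) by nra.
assert (0 <= Rpower R p / 10 * / Rpower (sqrt (y2 + b2)) p).
{ apply Rmult_le_pos; [unfold Rdiv; apply Rmult_le_pos|]; try left; try apply Rinv_0_lt_compat; auto; lra. }
assert (0 <= 10 / M^2) by (unfold Rdiv; apply Rmult_le_pos; [lra| left; apply Rinv_0_lt_compat; lra]).
destruct (Rle_lt_dec (M^2) y2) as [Hf|Hn].
- assert (10 / (y2 + 10^2) <= 10/M^2).
  { unfold Rdiv. apply Rmult_le_reg_r with ((y2+10^2)*M^2). nra. field_simplify; nra. }
  lra.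
- assert (Hle : Rpower (sqrt (y2+b2)) p <= Rpower R p).
  { apply Rle_Rpower_l; auto. split. apply sqrt_lt_R0; lra.
    rewrite <- (sqrt_pow2 R) by lra. apply sqrt_le_1_alt. lra. }
  assert (10 / (y2 + 10^2) <= Rpower R p / 10 * / Rpower (sqrt (y2 + b2)) p).
  { apply Rle_trans with (/10).
    unfold Rdiv. apply Rmult_le_reg_r with ((y2+10^2)*10). nra. field_simplify; nra.
    replace (Rpower R p / 10 * / Rpower (sqrt (y2 + b2)) p) with
     (/10 * (Rpower R p / Rpower (sqrt (y2 + b2)) p)) by (field; lra).
    rewrite <- (Rmult_1_r (/10)) at 1. apply Rmult_le_compat_l. lra.
    apply Rmult_le_reg_r with (Rpower (sqrt (y2 + b2)) p); auto. field_simplify; lra. }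
  lra.
Qed.

Lemma pw_up y2 s c eta k p : 0 < c -> c <= sqrt s -> 0 < s -> 0 < eta -> 2 <= p -> 0 <= y2 ->
  y2 + eta^2 <= k * s ->
  / Rpower (sqrt s) p <= / Rpower c (p-2) * (k/eta) * (eta / (y2 + eta^2)).
Proof. intros Hc Hcs Hs He Hp Hy Hk.
assert (0 < eta^2) by nra.
rewrite Rpower_sqrt2 by auto.
assert (P1 : 0 < Rpower c (p-2)) by apply Rpower_pos.
assert (Hle : Rpower c (p-2) <= Rpower (sqrt s) (p-2)) by (apply Rle_Rpower_l; lra).
replace (/ Rpower c (p-2) * (k/eta) * (eta / (y2 + eta^2))) with (/ Rpower c (p-2) * (k / (y2 + eta^2)))
  by (field; repeat split; intro; nra).
rewrite Rinv_mult.
apply Rmult_le_compat. left; apply Rinv_0_lt_compat; lra. left; apply Rinv_0_lt_compat; lra.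
apply Rinv_le_contravar; lra.
unfold Rdiv. apply Rmult_le_reg_r with (s*(y2+eta^2)). nra. field_simplify; nra.
Qed.

Lemma avg_small N V a b eta K R p : (0<N)%nat -> 0 < eta -> 0 < K -> 0 < R -> 0 <= p ->
  (K*eta)^2 + b^2 <= R^2 -> (forall i, (i<N)%nat -> 0 < (V i - a)^2 + b^2) ->
  Im_mV N V a eta <= 2/K * Im_mV N V a (K*eta) + Rpower R p / eta * moment N V p a b.
Proof. intros. unfold Im_mV, moment. rewrite <- avg_lin by auto.
apply avg_le. intros i Hi. apply pw_small; try apply pow2_ge_0; auto. Qed.

Lemma avg_large N V a b M R p : (0<N)%nat -> 0 < M -> 0 < R -> 0 <= p ->
  M^2 + b^2 <= R^2 -> (forall i, (i<N)%nat -> 0 < (V i - a)^2 + b^2) ->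
  Im_mV N V a 10 <= 10/M^2 + Rpower R p / 10 * moment N V p a b.
Proof. intros. unfold Im_mV, moment. rewrite <- avg_const_lin by auto.
apply avg_le. intros i Hi. apply pw_large; try apply pow2_ge_0; auto. Qed.

Lemma avg_up N V a b c eta k p : (0<N)%nat -> 0 < c -> 0 < eta -> 2 <= p ->
  (forall i, (i<N)%nat -> 0 < (V i - a)^2 + b^2 /\ c <= sqrt ((V i - a)^2 + b^2) /\
      (V i - a)^2 + eta^2 <= k * ((V i - a)^2 + b^2)) ->
  moment N V p a b <= / Rpower c (p-2) * (k/eta) * Im_mV N V a eta.
Proof. intros HN Hc He Hp H. unfold Im_mV, moment.
set (cc := / Rpower c (p-2) * (k/eta)).
replace (cc * (/ INR N * sumN N (fun i => eta / ((V i - a)^2 + eta^2)))) with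
  (/ INR N * sumN N (fun i => cc * (eta / ((V i - a)^2 + eta^2)))) by (rewrite sumN_scal; ring).
apply avg_le. intros i Hi. destruct (H i Hi) as (H1&H2&H3).
unfold cc. apply pw_up; try apply pow2_ge_0; auto. Qed.

Lemma sq_cmp u X v Y : 0 <= u -> 0 <= v -> 0 <= X -> 0 <= Y -> u^2 * X <= v^2 * Y ->
  u * sqrt X <= v * sqrt Y.
Proof. intros. rewrite <- (sqrt_pow2 u), <- (sqrt_pow2 v) by auto.
rewrite <- !sqrt_mult_alt by (apply pow2_ge_0). apply sqrt_le_1_alt; auto. Qed.

Lemma Rpower_m1 b p : 0 < b -> Rpower b p = Rpower b (p-1) * b.
Proof. intros. replace p with ((p-1)+1) at 1 by ring. rewrite Rpower_plus, Rpower_1; auto. Qed.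

Lemma Rpower_mul x y z : 0 < x -> 0 < y -> Rpower (x*y) z = Rpower x z * Rpower y z.
Proof. intros; rewrite Rpower_mult_distr; auto. Qed.

Lemma Rpower_half b p : 0 < b -> Rpower b (p-1) = Rpower b (p-3/2) * sqrt b.
Proof. intros. replace (p-1) with ((p-3/2) + /2) by field. rewrite Rpower_plus, Rpower_sqrt; auto. Qed.

Section A.
Variables (CV p es a b : R) (N : nat) (V : nat -> R).
Hypotheses (HCV : 1 <= CV) (Hp : 2 <= p) (HN : (0<N)%nat) (Hes : 0 < es <= 1)
  (Ha : 0 <= a <= 3/4) (Hb : sqrt es * sqrt a + es <= b <= 10)
  (reg : forall eta, sqrt es * sqrt a + es <= eta <= 10 ->
     / CV * sqrt (a + eta) <= Im_mV N V a eta /\ Im_mV N V a eta <= CV * sqrt (a + eta)).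

Variable K : R.
Hypothesis HKdef : K = 64 * CV^4.

Lemma b_pos : 0 < b.
Proof. assert (0 <= sqrt es * sqrt a) by (apply Rmult_le_pos; apply sqrt_pos). lra. Qed.

Lemma s_posA : forall i, (i<N)%nat -> 0 < (V i - a)^2 + b^2.
Proof. intros. pose proof b_pos. assert (0 <= (V i - a)^2) by apply pow2_ge_0. nra. Qed.

Lemma upperA : moment N V p a b <= CV * (sqrt (a + b) / Rpower b (p - 1)).
Proof. pose proof b_pos as Hb0.
eapply Rle_trans. apply (avg_up N V a b b b 1 p); auto.
intros i Hi. split. apply s_posA; auto. split. rewrite <- (sqrt_pow2 b) at 1 by lra.
apply sqrt_le_1_alt. assert (0 <= (V i - a)^2) by apply pow2_ge_0. lra. lra.
destruct (reg b) as [_ H2]. lra.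
assert (P : 0 < Rpower b (p-2)) by apply Rpower_pos.
replace (Rpower b (p-1)) with (Rpower b (p-2) * b).
2:{ replace (p-1) with ((p-2)+1) by ring. rewrite Rpower_plus, Rpower_1; auto. }
apply Rle_trans with (/ Rpower b (p - 2) * (1 / b) * (CV * sqrt (a+b))).
apply Rmult_le_compat_l. apply Rmult_le_pos. left; apply Rinv_0_lt_compat; auto.
unfold Rdiv; rewrite Rmult_1_l; left; apply Rinv_0_lt_compat; auto. auto.
right. field. lra.
Qed.

Lemma K_ge : 32 <= K.
Proof. rewrite HKdef. assert (1 <= CV^4) by (apply pow_R1_Rle; lra). lra. Qed.

Lemma lowerA_small : K * b <= 10 ->
  sqrt (a + b) / Rpower b (p - 1) / (2 * CV * Rpower (sqrt (K^2+1)) p) <= moment N V p a b.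
Proof. intro HKb. pose proof b_pos as Hb0. pose proof K_ge as HK.
assert (Hsq : 0 < sqrt (K^2+1)) by (apply sqrt_lt_R0; nra).
assert (H1 := avg_small N V a b b K (sqrt (K^2+1) * b) p HN Hb0 ltac:(lra) ltac:(nra) ltac:(lra)).
assert (H2 : (K * b) ^ 2 + b ^ 2 <= (sqrt (K ^ 2 + 1) * b) ^ 2).
{ rewrite !Rpow_mult_distr, pow2_sqrt by nra. nra. }
specialize (H1 H2 s_posA).
destruct (reg b) as [L1 _]. lra.
destruct (reg (K*b)) as [_ U1]. nra.
assert (Hc : 2 / K * (CV * sqrt (a + K*b)) <= / (2*CV) * sqrt (a+b)).
{ rewrite <- Rmult_assoc. apply sq_cmp.
  apply Rmult_le_pos; [apply Rmult_le_pos|]; try lra; left; apply Rinv_0_lt_compat; lra.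
  left; apply Rinv_0_lt_compat; lra. nra. lra.
  assert (E1 : (2/K*CV)^2 = 4*CV^2/K^2) by (field; lra).
  assert (E2 : (/(2*CV))^2 = / (4*CV^2)) by (field; lra).
  rewrite E1, E2.
  assert (F : 16 * CV^4 <= K) by (rewrite HKdef; nra).
  assert (0 < CV^2) by nra.
  apply Rmult_le_reg_r with (4*CV^2*K^2). nra.
  field_simplify; try lra.
  assert (G1 : 16*CV^4*K*b <= K^2*b).
  { apply Rmult_le_compat_r. lra. replace (K^2) with (K*K) by ring. apply Rmult_le_compat_r; lra. }
  assert (G2 : 16*CV^4*a <= K^2*a).
  { apply Rmult_le_compat_r. lra. assert (K <= K*K) by nra. replace (K^2) with (K*K) by ring. lra. }
  lra. }
assert (Hm : sqrt (a+b) / (2*CV) <= Rpower (sqrt (K ^ 2 + 1) * b) p / b * moment N V p a b).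
{ assert (/ CV * sqrt (a+b) = 2 * (/(2*CV) * sqrt (a+b))) by (field; lra).
  assert (2/K * Im_mV N V a (K*b) <= 2/K * (CV * sqrt (a + K*b))).
  { apply Rmult_le_compat_l; auto. unfold Rdiv; apply Rmult_le_pos; [lra| left; apply Rinv_0_lt_compat; lra]. }
  replace (sqrt (a+b) / (2*CV)) with (/(2*CV) * sqrt (a+b)) by (field; lra). lra. }
rewrite Rpower_mul in Hm by lra. rewrite (Rpower_m1 b p) in Hm by lra.
set (A1 := Rpower (sqrt (K^2+1)) p) in *.
set (B1 := Rpower b (p-1)) in *.
assert (0 < A1) by apply Rpower_pos. assert (0 < B1) by apply Rpower_pos.
replace (A1 * (B1 * b) / b) with (A1*B1) in Hm by (field; lra).
apply Rmult_le_reg_l with (A1*B1). nra.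
apply Rle_trans with (sqrt (a + b) / (2 * CV)). right. field. repeat split; lra. lra.
Qed.

Lemma lowerA_large : 20 / (CV * Rpower (sqrt (10*CV+100)) p) <= moment N V p a b.
Proof. pose proof b_pos as Hb0.
assert (HM : 0 < sqrt (10*CV)) by (apply sqrt_lt_R0; lra).
assert (HR : 0 < sqrt (10*CV+100)) by (apply sqrt_lt_R0; lra).
assert (H1 := avg_large N V a b (sqrt (10*CV)) (sqrt (10*CV+100)) p HN HM HR ltac:(lra)).
rewrite !pow2_sqrt in H1 by lra. specialize (H1 ltac:(nra) s_posA).
destruct (reg 10) as [L1 _].
{ split; [|lra]. assert (sqrt es <= 1) by (rewrite <- sqrt_1; apply sqrt_le_1_alt; lra).
  assert (sqrt a <= 1) by (rewrite <- sqrt_1; apply sqrt_le_1_alt; lra).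
  assert (0 <= sqrt a) by apply sqrt_pos. assert (0 <= sqrt es) by apply sqrt_pos. nra. }
assert (3 <= sqrt (a+10)) by (rewrite <- (sqrt_pow2 3) by lra; apply sqrt_le_1_alt; lra).
assert (3/CV <= / CV * sqrt (a + 10)).
{ unfold Rdiv. rewrite Rmult_comm. apply Rmult_le_compat_l; [left; apply Rinv_0_lt_compat|]; lra. }
replace (10 / (10*CV)) with (/CV) in H1 by (field; lra).
set (BL := Rpower (sqrt (10*CV+100)) p) in *. assert (0 < BL) by apply Rpower_pos.
assert (2/CV <= BL/10 * moment N V p a b).
{ replace (2/CV) with (3/CV - /CV) by (field; lra). lra. }
apply Rmult_le_reg_l with (BL/10). apply Rdiv_lt_0_compat; lra.
apply Rle_trans with (2/CV); auto. right. field. lra.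
Qed.

Lemma targetA_large : 10 < K * b -> sqrt (a + b) / Rpower b (p - 1) <= 4 / Rpower (10/K) (p-1).
Proof. intro H. pose proof b_pos. pose proof K_ge.
assert (sqrt (a+b) <= 4) by (rewrite <- (sqrt_pow2 4) by lra; apply sqrt_le_1_alt; lra).
assert (Hle : Rpower (10/K) (p-1) <= Rpower b (p-1)).
{ apply Rle_Rpower_l. lra. split. apply Rdiv_lt_0_compat; lra.
  apply Rmult_le_reg_l with K. lra. field_simplify; lra. }
assert (0 < Rpower (10/K) (p-1)) by apply Rpower_pos.
assert (0 <= sqrt (a+b)) by apply sqrt_pos.
unfold Rdiv. apply Rmult_le_compat; auto. left; apply Rinv_0_lt_compat, Rpower_pos.
apply Rinv_le_contravar; auto.
Qed.
End A.

Lemma sq_le u v : 0 <= v -> u^2 <= v^2 -> u <= v.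
Proof. intros. destruct (Rle_lt_dec u v); auto. nra. Qed.

Lemma div_sqrt_le x y : 0 < x <= y -> x / sqrt y <= sqrt x.
Proof. intros. assert (sqrt x <= sqrt y) by (apply sqrt_le_1_alt; lra).
assert (0 < sqrt x) by (apply sqrt_lt_R0; lra).
rewrite <- (sqrt_sqrt x) at 1 by lra. unfold Rdiv.
apply Rmult_le_reg_r with (sqrt y). lra. field_simplify; try lra. nra. Qed.

Lemma Rpower_inv x y : 0 < x -> Rpower (/x) y = / Rpower x y.
Proof. intros. unfold Rpower. rewrite ln_Rinv by auto.
rewrite <- exp_Ropp. f_equal. ring. Qed.

Lemma large_core CV p N V a b : 1 <= CV -> 2 <= p -> (0<N)%nat -> b^2 <= 100 ->
  (forall i, (i<N)%nat -> 0 < (V i - a)^2 + b^2) -> 3/CV <= Im_mV N V a 10 ->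
  20 / (CV * Rpower (sqrt (10*CV+100)) p) <= moment N V p a b.
Proof. intros HCV Hp HN Hb Hs Him.
assert (HM : 0 < sqrt (10*CV)) by (apply sqrt_lt_R0; lra).
assert (HR : 0 < sqrt (10*CV+100)) by (apply sqrt_lt_R0; lra).
assert (H1 := avg_large N V a b (sqrt (10*CV)) (sqrt (10*CV+100)) p HN HM HR ltac:(lra)).
rewrite !pow2_sqrt in H1 by lra. specialize (H1 ltac:(lra) Hs).
replace (10 / (10*CV)) with (/CV) in H1 by (field; lra).
set (BL := Rpower (sqrt (10*CV+100)) p) in *. assert (0 < BL) by apply Rpower_pos.
assert (2/CV <= BL/10 * moment N V p a b).
{ replace (2/CV) with (3/CV - /CV) by (field; lra). lra. }
apply Rmult_le_reg_l with (BL/10). apply Rdiv_lt_0_compat; lra.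
apply Rle_trans with (2/CV); auto. right. field. lra.
Qed.

Section Bsec.
Variables (CV p es a b K : R) (N : nat) (V : nat -> R).
Hypotheses (HCV : 1 <= CV) (Hp : 2 <= p) (HN : (0<N)%nat) (Hes : 0 < es <= 1)
  (HKdef : K = 64 * CV^4)
  (Ha : -3/4 <= a < 0) (Hb : 0 <= b <= 10) (Hd : 2 * es <= b - a)
  (dom : 2 * es <= b \/ a <= - 2 * es)
  (gap : forall i, (i<N)%nat -> ~ (-1 <= V i <= - es))
  (reg : forall eta, es <= eta <= 10 ->
     / CV * (eta / sqrt (-a + eta)) <= Im_mV N V a eta /\ Im_mV N V a eta <= CV * (eta / sqrt (-a + eta))).

Lemma dbound : forall i, (i<N)%nat -> (b - a)^2 <= 16 * ((V i - a)^2 + b^2).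
Proof. intros i Hi. specialize (gap i Hi).
assert (HV : V i < -1 \/ - es < V i) by (apply Rnot_le_lt_or; intro; apply gap; lra) ||
  (destruct (Rlt_le_dec (V i) (-1)); [left; auto|]; destruct (Rlt_le_dec (-es) (V i)); [right; auto| exfalso; apply gap; lra]).
destruct HV as [HV|HV].
- assert (1/16 <= (V i - a)^2) by nra. nra.
- destruct (Rle_lt_dec a (-2*es)).
  + assert (a^2/4 <= (V i - a)^2) by nra. nra.
  + destruct dom as [D|D]; [|lra]. nra.
Qed.

Lemma s_posB : forall i, (i<N)%nat -> 0 < (V i - a)^2 + b^2.
Proof. intros i Hi. pose proof (dbound i Hi). nra. Qed.


Lemma upperB : moment N V p a b <= 34 * CV * Rpower 4 (p-2) * / Rpower (b - a) (p - 3/2).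
Proof. set (d := b - a) in *. assert (Hdd : d = b - a) by reflexivity. clearbody d. assert (Hd0 : 0 < d) by lra.
eapply Rle_trans. apply (avg_up N V a b (d/4) (d/2) 17 p); auto; try lra.
{ intros i Hi. pose proof (dbound i Hi) as D. rewrite <- Hdd in D. assert (0 <= (V i - a)^2) by apply pow2_ge_0.
  split. nra. split. rewrite <- (sqrt_pow2 (d/4)) by lra. apply sqrt_le_1_alt. nra. nra. }
destruct (reg (d/2)) as [_ U]. lra.
assert (Hq : sqrt d / 2 <= sqrt (-a + d/2)).
{ replace (sqrt d / 2) with (/2 * sqrt d) by field. rewrite <- (Rmult_1_l (sqrt (-a + d/2))).
  apply sq_cmp; lra. }
assert (Hsd : 0 < sqrt d) by (apply sqrt_lt_R0; lra).
assert (HPd : Rpower (d/4) (p-2) = Rpower d (p-2) * / Rpower 4 (p-2)).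
{ unfold Rdiv. rewrite Rpower_mul, Rpower_inv; lra. }
assert (HT : Rpower d (p - 3/2) = Rpower d (p-2) * sqrt d).
{ replace (p - 3/2) with ((p-2) + /2) by field. rewrite Rpower_plus, Rpower_sqrt; auto. }
rewrite HPd, HT.
assert (0 < Rpower d (p-2)) by apply Rpower_pos. assert (0 < Rpower 4 (p-2)) by apply Rpower_pos.
set (Pd := Rpower d (p-2)) in *. set (P4 := Rpower 4 (p-2)) in *. clearbody Pd P4.
apply Rle_trans with (/ (Pd * / P4) * (17 / (d / 2)) * (CV * (d / 2 / (sqrt d / 2)))).
{ apply Rmult_le_compat_l. apply Rmult_le_pos. left; apply Rinv_0_lt_compat.
  apply Rmult_lt_0_compat; auto; apply Rinv_0_lt_compat; auto. left; apply Rdiv_lt_0_compat; lra.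
  apply Rle_trans with (CV * (d / 2 / sqrt (- a + d / 2))); auto.
  apply Rmult_le_compat_l. lra. unfold Rdiv. apply Rmult_le_compat_l. lra.
  apply Rinv_le_contravar; lra. }
right. field. repeat split; lra.
Qed.

Lemma lowerB_small : K * (b - a) <= 20 ->
  / Rpower (b - a) (p - 3/2) / (10 * CV * Rpower (sqrt (K^2/4+1)) p) <= moment N V p a b.
Proof. intro HKd. set (d := b - a) in *. assert (Hdd : d = b - a) by reflexivity. clearbody d. assert (Hd0 : 0 < d) by lra.
assert (HK : 64 <= K) by (rewrite HKdef; assert (1 <= CV^4) by (apply pow_R1_Rle; lra); lra).
assert (Hsq : 0 < sqrt (K^2/4+1)) by (apply sqrt_lt_R0; nra).
assert (H1 := avg_small N V a b (d/2) K (sqrt (K^2/4+1) * d) p HN ltac:(lra) ltac:(lra) ltac:(nra) ltac:(lra)).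
assert (H2 : (K * (d/2)) ^ 2 + b ^ 2 <= (sqrt (K^2/4+1) * d) ^ 2).
{ rewrite !Rpow_mult_distr, pow2_sqrt by nra. assert (b <= d) by lra. nra. }
specialize (H1 H2 (s_posB)).
destruct (reg (d/2)) as [L1 _]. lra.
destruct (reg (K*(d/2))) as [_ U1]. nra.
assert (Hsd : 0 < sqrt d) by (apply sqrt_lt_R0; lra).
assert (Hl : 2/5 * sqrt d <= d/2 / sqrt (-a + d/2)).
{ assert (0 < sqrt (-a + d/2)) by (apply sqrt_lt_R0; lra).
  apply Rmult_le_reg_r with (sqrt (-a + d/2)). auto.
  replace (d / 2 / sqrt (- a + d / 2) * sqrt (- a + d / 2)) with (d/2) by (field; lra).
  rewrite Rmult_assoc, <- sqrt_mult_alt by lra.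
  apply sq_le. lra. rewrite Rpow_mult_distr, pow2_sqrt by nra.
  assert (-a <= d) by lra. nra. }
assert (Hu : K*(d/2) / sqrt (-a + K*(d/2)) <= sqrt (K*(d/2))) by (apply div_sqrt_le; nra).
assert (Hc : 2 / K * (CV * sqrt (K*(d/2))) <= / (5*CV) * sqrt d).
{ rewrite <- Rmult_assoc. apply sq_cmp.
  apply Rmult_le_pos; [apply Rmult_le_pos|]; try lra; left; apply Rinv_0_lt_compat; lra.
  left; apply Rinv_0_lt_compat; lra. nra. lra.
  assert (E1 : (2/K*CV)^2 * (K*(d/2)) = 2*CV^2*d/K) by (field; lra).
  assert (E2 : (/(5*CV))^2 = / (25*CV^2)) by (field; lra).
  rewrite E1, E2.
  assert (F : 50 * CV^4 <= K) by (rewrite HKdef; assert (0 <= CV^4) by (apply pow_le; lra); lra).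
  assert (0 < CV^2) by nra.
  apply Rmult_le_reg_r with (25*CV^2*K). nra.
  field_simplify; try lra.
  replace (CV^4) with (CV^2*CV^2) in F by ring.
  assert (50 * CV^2*CV^2*d <= K*d) by (apply Rmult_le_compat_r; lra). lra. }
assert (Hm : sqrt d / (5*CV) <= Rpower (sqrt (K^2/4+1) * d) p / (d/2) * moment N V p a b).
{ assert (2/K * Im_mV N V a (K*(d/2)) <= 2/K * (CV * sqrt (K*(d/2)))).
  { apply Rmult_le_compat_l. unfold Rdiv; apply Rmult_le_pos; [lra| left; apply Rinv_0_lt_compat; lra].
    apply Rle_trans with (CV * (K * (d / 2) / sqrt (- a + K * (d / 2)))); auto.
    apply Rmult_le_compat_l; lra. }
  assert (/ CV * (2/5 * sqrt d) <= Im_mV N V a (d/2)).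
  { apply Rle_trans with (/ CV * (d / 2 / sqrt (- a + d / 2))); auto.
    apply Rmult_le_compat_l; auto. left; apply Rinv_0_lt_compat; lra. }
  replace (sqrt d / (5*CV)) with (/ CV * (2/5 * sqrt d) - / (5*CV) * sqrt d) by (field; lra). lra. }
rewrite Rpower_mul in Hm by lra.
assert (HT : Rpower d p = Rpower d (p - 3/2) * d * sqrt d).
{ replace p with ((p - 3/2) + 1 + /2) at 1 by field. rewrite !Rpower_plus, Rpower_sqrt, Rpower_1; auto. }
rewrite HT in Hm.
set (A2 := Rpower (sqrt (K^2/4+1)) p) in *.
set (B2 := Rpower d (p-3/2)) in *.
assert (0 < A2) by apply Rpower_pos. assert (0 < B2) by apply Rpower_pos. clearbody A2 B2.
replace (A2 * (B2 * d * sqrt d) / (d/2)) with (2*A2*B2*sqrt d) in Hm by (field; lra).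
apply Rmult_le_reg_l with (2*A2*B2*sqrt d). apply Rmult_lt_0_compat; [nra|auto].
apply Rle_trans with (sqrt d / (5 * CV)); auto. right. field. repeat split; lra.
Qed.

Lemma lowerB_large : 20 / (CV * Rpower (sqrt (10*CV+100)) p) <= moment N V p a b.
Proof. apply large_core; auto. nra. apply s_posB.
destruct (reg 10) as [L _]. lra.
assert (Hs : sqrt (-a + 10) <= 10/3).
{ rewrite <- (sqrt_pow2 (10/3)) by lra. apply sqrt_le_1_alt. lra. }
assert (0 < sqrt (-a+10)) by (apply sqrt_lt_R0; lra).
apply Rle_trans with (/ CV * (10 / sqrt (- a + 10))); auto.
replace (3/CV) with (/CV * 3) by (field; lra). apply Rmult_le_compat_l. left; apply Rinv_0_lt_compat; lra.
apply Rmult_le_reg_r with (sqrt (-a+10)); auto. field_simplify; lra.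
Qed.

Lemma targetB_large : 20 < K * (b - a) -> / Rpower (b - a) (p - 3/2) <= / Rpower (20/K) (p - 3/2).
Proof. intro H.
assert (HK : 64 <= K) by (rewrite HKdef; assert (1 <= CV^4) by (apply pow_R1_Rle; lra); lra).
apply Rinv_le_contravar. apply Rpower_pos.
apply Rle_Rpower_l. lra. split. apply Rdiv_lt_0_compat; lra.
apply Rmult_le_reg_l with K. lra. field_simplify; lra.
Qed.

End Bsec.

Lemma lowtrans T c C0 m : 0 <= T -> 0 < c -> c <= C0 -> T / c <= m -> / C0 * T <= m.
Proof. intros. apply Rle_trans with (T/c); auto. unfold Rdiv. rewrite Rmult_comm.
apply Rmult_le_compat_l; auto. apply Rinv_le_contravar; auto. Qed.

Lemma uptrans T c C0 m : 0 <= T -> c <= C0 -> m <= c * T -> m <= C0 * T.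
Proof. intros. apply Rle_trans with (c*T); auto. apply Rmult_le_compat_r; auto. Qed.

Lemma largetrans X P k T C0 m : 0 < X -> 0 < P -> X / P <= C0 -> 0 <= T -> T <= k / P -> k <= 20 ->
  20 / X <= m -> / C0 * T <= m.
Proof. intros HX HP HC HT HTk Hk Hm.
assert (0 < X/P) by (apply Rdiv_lt_0_compat; auto).
assert (HiC : / C0 <= P / X).
{ replace (P/X) with (/ (X/P)) by (field; lra). apply Rinv_le_contravar; auto. }
apply Rle_trans with (P/X * (k/P)).
apply Rmult_le_compat; auto. left; apply Rinv_0_lt_compat; lra.
replace (P/X * (k/P)) with (k/X) by (field; lra).
apply Rle_trans with (20/X); auto. unfold Rdiv. apply Rmult_le_compat_r; auto.
left; apply Rinv_0_lt_compat; auto. Qed.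

Theorem lemmaC1 (CV p : R) :
  0 < CV -> 2 <= p ->
  exists C : R, 0 < C /\
    forall (N : nat) (phi : R) (V : nat -> R),
      (0 < N)%nat -> 0 < phi <= 2/3 ->
      regular N phi CV V ->
      forall a b : R, InDstar (eta_star N phi) a b ->
        (0 <= a -> asymp C (moment N V p a b) (sqrt (a + b) / Rpower b (p - 1))) /\
        (a <= 0 -> asymp C (moment N V p a b) (/ Rpower (Rabs a + b) (p - 3/2))).
Proof.
intros HCV0 Hp.
set (K := 64 * CV^4).
set (A1 := Rpower (sqrt (K^2+1)) p).
set (A2 := Rpower (sqrt (K^2/4+1)) p).
set (BL := Rpower (sqrt (10*CV+100)) p).
set (P10 := Rpower (10/K) (p-1)).
set (P20 := Rpower (20/K) (p-3/2)).
set (P4 := Rpower 4 (p-2)).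
assert (0 < A1) by apply Rpower_pos. assert (0 < A2) by apply Rpower_pos.
assert (0 < BL) by apply Rpower_pos. assert (0 < P10) by apply Rpower_pos.
assert (0 < P20) by apply Rpower_pos. assert (0 < P4) by apply Rpower_pos.
assert (HK : K = 64 * CV^4) by reflexivity.
assert (HA1 : A1 = Rpower (sqrt (K^2+1)) p) by reflexivity.
assert (HA2 : A2 = Rpower (sqrt (K^2/4+1)) p) by reflexivity.
assert (HBL : BL = Rpower (sqrt (10*CV+100)) p) by reflexivity.
assert (HP10 : P10 = Rpower (10/K) (p-1)) by reflexivity.
assert (HP20 : P20 = Rpower (20/K) (p-3/2)) by reflexivity.
assert (HP4 : P4 = Rpower 4 (p-2)) by reflexivity.
clearbody K A1 A2 BL P10 P20 P4.
assert (0 < CV*BL) by nra.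
assert (0 < CV*BL/P10) by (apply Rdiv_lt_0_compat; lra).
assert (0 < CV*BL/P20) by (apply Rdiv_lt_0_compat; lra).
set (C := CV + 2*CV*A1 + CV*BL/P10 + 34*CV*P4 + 10*CV*A2 + CV*BL/P20).
assert (HC1 : CV <= C) by (unfold C; nra).
assert (HC2 : 2*CV*A1 <= C) by (unfold C; nra).
assert (HC3 : CV*BL/P10 <= C) by (unfold C; nra).
assert (HC4 : 34*CV*P4 <= C) by (unfold C; nra).
assert (HC5 : 10*CV*A2 <= C) by (unfold C; nra).
assert (HC6 : CV*BL/P20 <= C) by (unfold C; nra).
assert (HCpos : 0 < C) by lra.
clearbody C.
exists C. split; auto.
intros N phi V HN Hphi Hreg a b HD.
unfold regular in Hreg. cbv zeta in Hreg.
destruct Hreg as (Hmono & Hneg & Hpos & Hgap & Hbd).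
set (es := eta_star N phi) in *.
assert (Hes0 : 0 < es) by apply Rpower_pos.
assert (Hes1 : es <= 1).
{ unfold es, eta_star. rewrite <- (Rpower_O (INR N)) by (apply lt_0_INR; lia).
  apply Rle_Rpower. apply (le_INR 1); lia. lra. }
clearbody es.
assert (HCV : 1 <= CV).
{ destruct (Hneg 0 10) as [L U]. lra. lra.
  assert (0 < 10 / sqrt (Rabs 0 + 10)) by (apply Rdiv_lt_0_compat; [lra| apply sqrt_lt_R0; rewrite Rabs_R0; lra]).
  assert (/CV <= CV) by (apply Rmult_le_reg_r with (10 / sqrt (Rabs 0 + 10)); lra). destruct (Rlt_le_dec CV 1); auto.
  assert (1 < /CV) by (rewrite <- Rinv_1; apply Rinv_lt_contravar; lra). lra. }
assert (caseA : 0 <= a -> asymp C (moment N V p a b) (sqrt (a + b) / Rpower b (p - 1))).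
{ intro Ha0.
  assert (Ha : a <= 3/4 /\ sqrt es * sqrt a + es <= b <= 10).
  { destruct HD as [[D1 D2]|[[D1 D2]|[D1 D2]]].
    - assert (a = 0) by lra. subst a. rewrite sqrt_0. lra.
    - rewrite Rabs_right in D2 by lra. lra.
    - lra. }
  destruct Ha as [Ha Hb].
  assert (reg : forall eta, sqrt es * sqrt a + es <= eta <= 10 ->
     / CV * sqrt (a + eta) <= Im_mV N V a eta /\ Im_mV N V a eta <= CV * sqrt (a + eta)).
  { intros eta He. pose proof (Hpos a eta) as Hh. rewrite Rabs_right in Hh by lra. apply Hh; lra. }
  assert (Hb0 := b_pos es a b ltac:(lra) Hb).
  assert (HT : 0 <= sqrt (a + b) / Rpower b (p - 1)).
  { apply Rmult_le_pos. apply sqrt_pos. left; apply Rinv_0_lt_compat, Rpower_pos. }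
  split.
  - destruct (Rle_lt_dec (K*b) 10) as [Hs|Hl].
    + eapply lowtrans. auto. 2: apply HC2. nra.
      rewrite HA1. eapply lowerA_small; eauto.
    + eapply largetrans with (X := CV*BL) (P := P10) (k := 4); auto.
      rewrite HP10. eapply targetA_large; eauto. all: try lra.
      rewrite HBL. eapply lowerA_large; eauto.
  - apply uptrans with CV; auto. eapply upperA; eauto.
}
split; [exact caseA|]. intro Ha0.
destruct (Req_dec a 0) as [Ha|Ha].
{ subst a. rewrite Rabs_R0, Rplus_0_l.
  assert (Hb0 : 0 < b) by (destruct HD as [[D1 D2]|[[D1 D2]|[D1 D2]]]; [lra| |lra];
     assert (0 <= sqrt es * sqrt (Rabs 0)) by (apply Rmult_le_pos; apply sqrt_pos); lra).
  replace (/ Rpower b (p - 3/2)) with (sqrt (0 + b) / Rpower b (p - 1)).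
  apply caseA; lra.
  rewrite Rplus_0_l, Rpower_half by auto. assert (0 < sqrt b) by (apply sqrt_lt_R0; auto).
  assert (0 < Rpower b (p - 3/2)) by apply Rpower_pos. field. lra. }
assert (Ha' : -3/4 <= a < 0 /\ 0 <= b <= 10 /\ 2 * es <= b - a /\ (2 * es <= b \/ a <= - 2 * es)).
{ destruct HD as [[D1 D2]|[[D1 D2]|[D1 D2]]]; lra. }
destruct Ha' as (Ha1 & Hb & Hd & dom).
rewrite Rabs_left by lra. replace (- a + b) with (b - a) by ring.
assert (reg : forall eta, es <= eta <= 10 ->
     / CV * (eta / sqrt (-a + eta)) <= Im_mV N V a eta /\ Im_mV N V a eta <= CV * (eta / sqrt (-a + eta))).
{ intros eta He. pose proof (Hneg a eta) as Hh. rewrite Rabs_left in Hh by lra. apply Hh; lra. }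
assert (HT : 0 <= / Rpower (b - a) (p - 3/2)) by (left; apply Rinv_0_lt_compat, Rpower_pos).
assert (Hes : 0 < es <= 1) by lra.
split.
- destruct (Rle_lt_dec (K*(b-a)) 20) as [Hs|Hl].
  + eapply lowtrans. auto. 2: apply HC5. nra.
    rewrite HA2. eapply lowerB_small; eauto.
  + eapply largetrans with (X := CV*BL) (P := P20) (k := 1); auto.
    rewrite HP20. unfold Rdiv; rewrite Rmult_1_l. eapply targetB_large; eauto. lra.
    rewrite HBL. eapply lowerB_large; eauto.
- apply uptrans with (34*CV*P4); auto. rewrite HP4. eapply upperB; eauto.
Qed.
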